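(* Let $\Sigma$ be a Hamiltonian surface in the Brady complex $X$. Then for every vertex $x$ of $X$, the Hamiltonian cycle $\Sigma\cap L_x$ of the link $L_x$ is of type 3.
   Context: The Brady complex $X$ is the simply connected CAT(0) piecewise Euclidean 2-complex (constructed by T. Brady) on which $\mathrm{Aut}(F_2)$ acts properly and cocompactly by cellular isometries, transitively on vertices. Its closed 2-cells (faces) are unit equilateral triangles and unit lozenges (rhombi with angles $\pi/3$ and $2\pi/3$); every edge lies in exactly one triangle and two lozenges. The link $L_x$ of a vertex $x$ is the graph whose vertices are the edges of $X$ at $x$ and whose edges are the corners at $x$ of faces containing $x$; a link edge is labeled $t$ (triangle corner), $\ell$ (lozenge corner of angle $\pi/3$) or $\mathcal{L}$ (lozenge corner of angle $2\pi/3$). Each labeled $L_x$ is isomorphic to the Moebius ladder with vertices $u_0,\dots,u_3,w_0,\dots,w_3$, rungs $u_iw_i$ labeled $\mathcal{L}$, horizontal edges $u_0u_1,u_2u_3,w_0w_1,w_2w_3$ labeled $\ell$ and $u_1u_2,u_3w_0,w_1w_2,w_3u_0$ labeled $t$. Its Hamiltonian cycles are: type 1, the unique one with no rung; and those containing exactly two rungs joined by two horizontal paths of three edges each, which are of type 2 if these paths are labeled $\ell,t,\ell$ and of type 3 if they are labeled $t,\ell,t$. A Hamiltonian surface in $X$ is a connected union $\Sigma$ of closed faces which is a surface without boundary, contains every vertex and every edge of $X$, and has no multiple vertex; for each vertex $x$, $\Sigma\cap L_x$ (the corners of faces of $\Sigma$ at $x$) is a Hamiltonian cycle of $L_x$.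 *)

(* Defs.v *)
From Stdlib Require Import Relations.
From mathcomp Require Import all_boot.

Set Implicit Arguments.
Unset Strict Implicit.
Unset Printing Implicit Defensive.

(* A letter is (g, e): g = false for a, true for b; e = true for an inverse. *)
(* Elements of F_2 are reduced words.                                        *)
Definition letter := (bool * bool)%type.
Definition word := seq letter.

Definition linv (l : letter) : letter := (l.1, ~~ l.2).

Definition reducedb (w : word) : bool :=
  if w is l :: t then path (fun a b => b != linv a) l t else true.

Definition freduce (w : word) : word :=
  foldr (fun l acc => if acc is h :: t then (if h == linv l then t else l :: acc)
                      else [:: l]) [::] w.

Definition winv (w : word) : word := rev (map linv w).

(* An endomorphism of F_2 is given by the pair (image of a, image of b). *)
Definition endo := (word * word)%type.

Definition img (p : endo) (l : letter) : word :=
  let u := if l.1 then p.2 else p.1 in if l.2 then winv u else u.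

Definition subst (p : endo) (w : word) : word := freduce (flatten (map (img p) w)).

(* composition p o q (first q, then p) *)
Definition acomp (p q : endo) : endo := (subst p q.1, subst p q.2).

Definition idaut : endo := ([:: (false, false)], [:: (true, false)]).

Definition is_aut (p : endo) : Prop :=
  reducedb p.1 && reducedb p.2 /\
  exists q : endo, reducedb q.1 && reducedb q.2 /\ acomp p q = idaut /\ acomp q p = idaut.

(* V = vertices, F = faces, adj = edge relation (edges are unordered pairs   *)
(* of vertices), fv f = cyclic list of the vertices of f: 3 vertices for a   *)
(* unit equilateral triangle, 4 for a unit lozenge, listed starting at an    *)
(* acute (pi/3) corner, so the acute corners are those at even positions.    *)
Section Complex.
Variables (V F : eqType) (adj : V -> V -> Prop) (fv : F -> seq V).

Definition cnext (s : seq V) (x : V) : V := nth x s ((index x s).+1 %% size s).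
Definition cprev (s : seq V) (x : V) : V :=
  nth x s ((index x s + (size s).-1) %% size s).

Definition is_tri (f : F) : bool := size (fv f) == 3.
Definition is_loz (f : F) : bool := size (fv f) == 4.

Definition edge_in (f : F) (x y : V) : Prop :=
  x \in fv f /\ (cnext (fv f) x = y \/ cprev (fv f) x = y).

(* labels of link edges: t (triangle corner), l (acute lozenge corner),
   L (obtuse lozenge corner) *)
Inductive lab := Lt | Ll | LL.

Definition corner_lab (f : F) (x : V) : lab :=
  if size (fv f) == 3 then Lt else if odd (index x (fv f)) then LL else Ll.

(* The link L_x: its vertices are the edges xy (i.e. the neighbours y of x),
   its edges are the corners at x of the faces containing x.  [linkedge x f a b]
   says: f contains x, and the corner of f at x is a link edge joining a and b. *)
Definition linkedge (x : V) (f : F) (a b : V) : Prop :=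
  x \in fv f /\
  ((cprev (fv f) x = a /\ cnext (fv f) x = b) \/
   (cprev (fv f) x = b /\ cnext (fv f) x = a)).

(* The labelled Moebius ladder: u_i = i, w_i = 4 + i (i < 4). *)
Definition ladder_edges : seq (nat * nat * lab) :=
  [:: (0, 4, LL); (1, 5, LL); (2, 6, LL); (3, 7, LL);   (* rungs u_i w_i *)
      (0, 1, Ll); (2, 3, Ll); (4, 5, Ll); (6, 7, Ll);
      (1, 2, Lt); (3, 4, Lt); (5, 6, Lt); (7, 0, Lt)].

Definition link_is_ladder (x : V) : Prop :=
  exists (phi : nat -> V) (psi : nat -> F),
    (forall i j, i < 8 -> j < 8 -> phi i = phi j -> i = j) /\
    (forall y, adj x y <-> exists2 i, i < 8 & phi i = y) /\
    (forall k l, k < 12 -> l < 12 -> psi k = psi l -> k = l) /\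
    (forall f, x \in fv f <-> exists2 k, k < 12 & psi k = f) /\
    (forall k, k < 12 ->
       let: (a, b, lb) := nth (0, 0, Lt) ladder_edges k in
       linkedge x (psi k) (phi a) (phi b) /\ corner_lab (psi k) x = lb).

Fixpoint epath (R : V -> V -> Prop) (x : V) (p : seq V) : Prop :=
  if p is y :: p' then R x y /\ epath R y p' else True.

(* elementary homotopies of edge paths in the 2-complex: removing/inserting
   a backtrack, removing/inserting the boundary loop of a face *)
Inductive hstep : seq V -> seq V -> Prop :=
| hs_back l1 l2 a b : adj a b -> hstep (l1 ++ a :: b :: a :: l2) (l1 ++ a :: l2)
| hs_face l1 l2 a r f k : rot k (fv f) = a :: r ->
    hstep (l1 ++ a :: l2) (l1 ++ a :: r ++ a :: l2).

Definition simply_connected : Prop :=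
  (forall x y, exists p, epath adj x p /\ last x p = y) /\
  (forall a p, epath adj a p -> last a p = a ->
     clos_refl_sym_trans (seq V) hstep (a :: p) [:: a]).

(* t is the cyclic vertex list s after a cellular isometry of the face
   (rotation / reflection; for lozenges acute corners go to acute corners) *)
Definition feq (s t : seq V) : Prop :=
  exists k, k < size s /\
    ((t = rot k s /\ ((size s == 4) ==> ~~ odd k)) \/
     (t = rot k (rev s) /\ ((size s == 4) ==> odd k))).

Record brady_complex (act : endo -> V -> V) : Prop := {
  bc_adj_sym : forall x y, adj x y -> adj y x;
  bc_adj_irr : forall x, ~ adj x x;
  bc_face_shape : forall f, (is_tri f || is_loz f) && uniq (fv f);
  bc_face_edges : forall f y, y \in fv f -> adj y (cnext (fv f) y);
  bc_one_tri : forall x y, adj x y ->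
    exists t, [/\ is_tri t, edge_in t x y &
      forall t', is_tri t' -> edge_in t' x y -> t' = t];
  bc_two_loz : forall x y, adj x y ->
    exists l1 l2, [/\ l1 <> l2, is_loz l1 && is_loz l2, edge_in l1 x y, edge_in l2 x y &
      forall l, is_loz l -> edge_in l x y -> l = l1 \/ l = l2];
  bc_links : forall x, link_is_ladder x;
  (* simply connected (with the links above this gives CAT(0)) *)
  bc_simply_connected : simply_connected;
  bc_act_id : forall x, act idaut x = x;
  bc_act_comp : forall g h, is_aut g -> is_aut h ->
    forall x, act (acomp g h) x = act g (act h x);
  bc_act_adj : forall g, is_aut g -> forall x y, adj x y -> adj (act g x) (act g y);
  bc_act_face : forall g, is_aut g -> forall f, exists f', feq (map (act g) (fv f)) (fv f');
  (* ... properly (finite vertex stabilisers; X is locally finite) ... *)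
  bc_act_proper : forall x, exists s : seq endo,
    forall g, is_aut g -> act g x = x -> g \in s;
  (* ... cocompactly (finitely many orbits of faces) ... *)
  bc_act_cocompact : exists fs : seq F, forall f, exists2 f0, f0 \in fs &
    exists2 g, is_aut g & feq (map (act g) (fv f0)) (fv f);
  bc_act_trans : forall x y, exists2 g, is_aut g & act g x = y
}.

(* Hamiltonian surfaces: S is the set of faces of Sigma.                     *)

Definition link_single_cycle (S : F -> Prop) (x : V) : Prop :=
  exists n, 3 <= n /\ exists (ys : nat -> V) (fs : nat -> F),
    [/\ forall i j, i < n -> j < n -> ys i = ys j -> i = j,
        forall i j, i < n -> j < n -> fs i = fs j -> i = j,
        forall i, i < n -> S (fs i) /\ linkedge x (fs i) (ys i) (ys ((i.+1) %% n)) &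
        forall f, S f -> x \in fv f -> exists2 i, i < n & fs i = f].

Definition hamiltonian_surface (S : F -> Prop) : Prop :=
  [/\
      (forall x y, exists p,
         epath (fun u v => exists2 f, S f & edge_in f u v) x p /\ last x p = y),
      (forall x, exists2 f, S f & x \in fv f),
      (forall x y, adj x y -> exists2 f, S f & edge_in f x y) &
      (* surface without boundary and without multiple vertex: the link of
         Sigma at every vertex is a single circle *)
      (forall x, link_single_cycle S x)].

Definition type3 (S : F -> Prop) (x : V) : Prop :=
  exists (r1 r2 a1 b1 c1 a2 b2 c2 : F) (v0 v1 v2 v3 v0' w1 w2 v3' : V),
    [/\ uniq [:: r1; r2; a1; b1; c1; a2; b2; c2],
        uniq [:: v0; v1; v2; v3; v3'; w2; w1; v0'],
        (linkedge x r1 v0 v0' /\ linkedge x r2 v3 v3' /\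
         linkedge x a1 v0 v1 /\ linkedge x b1 v1 v2 /\ linkedge x c1 v2 v3 /\
         linkedge x a2 v0' w1 /\ linkedge x b2 w1 w2 /\ linkedge x c2 w2 v3'),
        (corner_lab r1 x = LL /\ corner_lab r2 x = LL /\
         corner_lab a1 x = Lt /\ corner_lab b1 x = Ll /\ corner_lab c1 x = Lt /\
         corner_lab a2 x = Lt /\ corner_lab b2 x = Ll /\ corner_lab c2 x = Lt) &
        forall f, (S f /\ x \in fv f) <-> f \in [:: r1; r2; a1; b1; c1; a2; b2; c2]].

End Complex.

(* Main.v *)
Require Import Defs.
From Stdlib Require Import Relations.
From mathcomp Require Import all_boot.
Set Implicit Arguments. Unset Strict Implicit. Unset Printing Implicit Defensive.

Definition le1 k := (nth (0,0,Lt) ladder_edges k).1.1.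
Definition le2 k := (nth (0,0,Lt) ladder_edges k).1.2.
Definition lel k := (nth (0,0,Lt) ladder_edges k).2.
Definition labc (l : lab) : nat := match l with Lt => 0 | Ll => 1 | LL => 2 end.
Definition isLL l := labc l == 2.
Definition isLt l := labc l == 0.
Definition epred a b k := ((le1 k == a) && (le2 k == b)) || ((le1 k == b) && (le2 k == a)).
Definition ladj a b := has (epred a b) (iota 0 12).
Definition eidx a b := find (epred a b) (iota 0 12).
Definition einc v k := (le1 k == v) || (le2 k == v).
Definition es_of (l : seq nat) := [seq eidx p.1 p.2 | p <- zip l (rot 1 l)].
Definition tri_ok (l es : seq nat) (T3 : bool) k :=
  [&& has (fun k1 => (k1 != k) && einc (le1 k) k1) es,
      has (fun k1 => (k1 != k) && einc (le2 k) k1) es &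
      all (fun k1 => all (fun k2 => ((k1 != k) && einc (le1 k) k1 && (k2 != k) && einc (le2 k) k2) ==>
          (~~ (isLL (lel k1) && isLL (lel k2)) && ((isLL (lel k1) || isLL (lel k2)) ==> T3))) es) es].
Definition reord (w : seq nat) := [:: nth 0 w 7; nth 0 w 3; nth 0 w 0; nth 0 w 1; nth 0 w 2; nth 0 w 6; nth 0 w 5; nth 0 w 4].
Definition t3at (l : seq nat) s :=
  let w := es_of (rot s l) in
  [&& map (fun k => labc (lel k)) w == [:: 0; 1; 0; 2; 0; 1; 0; 2],
      uniq (reord w) & perm_eq (reord w) (es_of l)].
Definition T3 l := has (t3at l) (iota 0 8).
Definition Good l := let es := es_of l in
  [&& has (fun k => isLt (lel k)) es &
      all (fun k => isLt (lel k) ==> tri_ok l es (T3 l) k) es].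
Definition Hcyc l := uniq l && cycle ladj l.

Definition chk :=
 all (fun a0 => all (fun a1 => if ladj a0 a1 then
 all (fun a2 => if ladj a1 a2 then
 all (fun a3 => if ladj a2 a3 then
 all (fun a4 => if ladj a3 a4 then
 all (fun a5 => if ladj a4 a5 then
 all (fun a6 => if ladj a5 a6 then
 all (fun a7 => if Hcyc [:: a0; a1; a2; a3; a4; a5; a6; a7] then Good [:: a0; a1; a2; a3; a4; a5; a6; a7] else true)
 (iota 0 8) else true) (iota 0 8) else true) (iota 0 8) else true) (iota 0 8) else true) (iota 0 8) else true) (iota 0 8) else true) (iota 0 8)) (iota 0 8).

Lemma chk_true : chk = true.
Proof. vm_compute. reflexivity. Qed.




Section Lists.
Variable V : eqType.
Implicit Types (s : seq V) (x : V).

Lemma size_pos s x : x \in s -> 0 < size s.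
Proof. by case: s. Qed.

Lemma index_cnext s x : uniq s -> x \in s ->
  index (cnext s x) s = (index x s).+1 %% size s.
Proof.
move=> u xs; rewrite /cnext index_uniq // ltn_mod; exact: size_pos xs.
Qed.

Lemma index_cprev s x : uniq s -> x \in s ->
  index (cprev s x) s = (index x s + (size s).-1) %% size s.
Proof.
move=> u xs; rewrite /cprev index_uniq // ltn_mod; exact: size_pos xs.
Qed.

Lemma cnext_in s x : x \in s -> cnext s x \in s.
Proof. move=> xs; rewrite /cnext mem_nth // ltn_mod; exact: size_pos xs. Qed.

Lemma cprev_in s x : x \in s -> cprev s x \in s.
Proof. move=> xs; rewrite /cprev mem_nth // ltn_mod; exact: size_pos xs. Qed.

Lemma nth_index_mod s x y i : x \in s -> nth y s (i %% size s) = nth x s (i %% size s).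
Proof. move=> xs; apply: set_nth_default; rewrite ltn_mod; exact: size_pos xs. Qed.

Lemma cprev_cnext s x : uniq s -> x \in s -> cprev s (cnext s x) = x.
Proof.
move=> u xs; have n0 := size_pos xs.
rewrite {1}/cprev index_cnext //.
rewrite (nth_index_mod _ _ xs).
rewrite modnDml addSn -addnS prednK //.
by rewrite modnDr modn_small ?index_mem // nth_index.
Qed.

Lemma cnext_cprev s x : uniq s -> x \in s -> cnext s (cprev s x) = x.
Proof.
move=> u xs; have n0 := size_pos xs.
rewrite {1}/cnext index_cprev //.
rewrite (nth_index_mod _ _ xs).
rewrite -addn1 modnDml -addnA addn1 prednK //.
by rewrite modnDr modn_small ?index_mem // nth_index.
Qed.
End Lists.

Section Lists2.
Variable V : eqType.
Implicit Types (s : seq V) (x : V).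

Lemma odd_cnext4 s x : uniq s -> x \in s -> size s = 4 ->
  odd (index (cnext s x) s) = ~~ odd (index x s).
Proof.
move=> u xs s4; rewrite index_cnext // s4.
have : index x s < 4 by rewrite -s4 index_mem.
by case: (index x s) => [|[|[|[|]]]].
Qed.

Lemma odd_cprev4 s x : uniq s -> x \in s -> size s = 4 ->
  odd (index (cprev s x) s) = ~~ odd (index x s).
Proof.
move=> u xs s4; rewrite index_cprev // s4.
have : index x s < 4 by rewrite -s4 index_mem.
by case: (index x s) => [|[|[|[|]]]].
Qed.

Lemma cnext_cnext3 s x : uniq s -> x \in s -> size s = 3 ->
  cnext s (cnext s x) = cprev s x.
Proof.
move=> u xs s3.
have h1 := cnext_in xs; have h2 := cnext_in h1; have h3 := cprev_in xs.
rewrite -(nth_index x h2) -(nth_index x h3) !index_cnext ?index_cprev // s3.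
have : index x s < 3 by rewrite -s3 index_mem.
by case: (index x s) => [|[|[|]]].
Qed.

Lemma cprev_cprev3 s x : uniq s -> x \in s -> size s = 3 ->
  cprev s (cprev s x) = cnext s x.
Proof.
move=> u xs s3.
have h1 := cprev_in xs; have h2 := cprev_in h1; have h3 := cnext_in xs.
rewrite -(nth_index x h2) -(nth_index x h3) !index_cprev ?index_cnext // s3.
have : index x s < 3 by rewrite -s3 index_mem.
by case: (index x s) => [|[|[|]]].
Qed.
End Lists2.


Lemma find_iota (p : pred nat) m : (exists2 k, k < m & p k) ->
  find p (iota 0 m) < m /\ p (find p (iota 0 m)).
Proof.
case=> k km pk.
have hh : has p (iota 0 m) by apply/hasP; exists k; rewrite ?mem_iota.
have hf : find p (iota 0 m) < m by rewrite -[X in _ < X](size_iota 0 m) -has_find.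
split=> //; have := nth_find 0 hh; by rewrite nth_iota.
Qed.

Lemma eidx_spec a b : ladj a b -> eidx a b < 12 /\
  ((le1 (eidx a b) = a /\ le2 (eidx a b) = b) \/ (le1 (eidx a b) = b /\ le2 (eidx a b) = a)).
Proof.
move=> /hasP [k]; rewrite mem_iota add0n => /andP [_ k12] pk.
have [h1 /orP [/andP [/eqP -> /eqP ->] | /andP [/eqP -> /eqP ->]]] := find_iota (ex_intro2 _ _ k k12 pk).
- by split=> //; left.
- by split=> //; right.
Qed.

Lemma ladj_edges k : k < 12 ->
  [&& le1 k < 8, le2 k < 8, ladj (le1 k) (le2 k), ladj (le2 k) (le1 k),
      eidx (le1 k) (le2 k) == k & eidx (le2 k) (le1 k) == k].
Proof.
move=> hk.
have : all (fun k => [&& le1 k < 8, le2 k < 8, ladj (le1 k) (le2 k), ladj (le2 k) (le1 k),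
      eidx (le1 k) (le2 k) == k & eidx (le2 k) (le1 k) == k]) (iota 0 12) by vm_compute.
by move/allP/(_ k); rewrite mem_iota; apply.
Qed.

Lemma isLL_eq l : isLL l = true <-> l = LL.
Proof. by case: l. Qed.

Lemma labc_inj l1 l2 : labc l1 = labc l2 -> l1 = l2.
Proof. by case: l1; case: l2. Qed.

Lemma fin_check l : size l = 8 -> all (fun a => a < 8) l -> Hcyc l -> Good l.
Proof.
case: l => [|a0 [|a1 [|a2 [|a3 [|a4 [|a5 [|a6 [|a7 [|? ?]]]]]]]]] //= _.
move=> /andP[b0 /andP[b1 /andP[b2 /andP[b3 /andP[b4 /andP[b5 /andP[b6 /andP[b7 _]]]]]]]] Hc.
have := Hc; move=> /andP[_ /=].
move=> /andP[h0 /andP[h1 /andP[h2 /andP[h3 /andP[h4 /andP[h5 /andP[h6 /andP[h7 _]]]]]]]].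
have := chk_true; rewrite /chk.
move=> /allP/(_ a0); rewrite mem_iota b0 => /(_ isT).
move=> /allP/(_ a1); rewrite mem_iota b1 h0 => /(_ isT).
move=> /allP/(_ a2); rewrite mem_iota b2 h1 => /(_ isT).
move=> /allP/(_ a3); rewrite mem_iota b3 h2 => /(_ isT).
move=> /allP/(_ a4); rewrite mem_iota b4 h3 => /(_ isT).
move=> /allP/(_ a5); rewrite mem_iota b5 h4 => /(_ isT).
move=> /allP/(_ a6); rewrite mem_iota b6 h5 => /(_ isT).
move=> /allP/(_ a7); rewrite mem_iota b7 => /(_ isT).
by rewrite Hc.
Qed.


Section Main.
Variables (V F : eqType) (adj : V -> V -> Prop) (fv : F -> seq V) (act : endo -> V -> V).
Hypothesis X : brady_complex adj fv act.

Lemma uniq_fv f : uniq (fv f).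
Proof. by case/andP: (bc_face_shape X f). Qed.

Lemma edge_in_sym f a b : edge_in fv f a b -> edge_in fv f b a.
Proof.
case=> af [<-|<-]; split.
- exact: cnext_in.
- by right; rewrite cprev_cnext // uniq_fv.
- exact: cprev_in.
- by left; rewrite cnext_cprev // uniq_fv.
Qed.

Lemma linkedge_sym x f a b : linkedge fv x f a b -> linkedge fv x f b a.
Proof. by case=> h [[? ?]|[? ?]]; split=> //; [right|left]. Qed.

Lemma linkedge_edge x f a b y : linkedge fv x f a b ->
  (edge_in fv f x y <-> y = a \/ y = b).
Proof.
case=> h [[e1 e2]|[e1 e2]]; rewrite /edge_in e1 e2; split.
- by case=> _ [<-|<-]; [right|left].
- by case=> ->; split=> //; [right|left].
- by case=> _ [<-|<-]; [left|right].
- by case=> ->; split=> //; [left|right].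
Qed.

Lemma linkedge_pair x f a b c d : linkedge fv x f a b -> linkedge fv x f c d ->
  (a = c /\ b = d) \/ (a = d /\ b = c).
Proof.
case=> _ [[<- <-]|[<- <-]] [_ [[-> ->]|[-> ->]]]; by [left|right].
Qed.

Lemma tri_corner f x : corner_lab fv f x = Lt <-> is_tri fv f.
Proof.
rewrite /corner_lab /is_tri; case: (size (fv f) == 3) => //.
by case: (odd _).
Qed.

Lemma loz_flip f p q : is_loz fv f -> edge_in fv f p q ->
  (corner_lab fv f q = LL <-> corner_lab fv f p <> LL).
Proof.
move=> /eqP s4 [pf [<-|<-]]; rewrite /corner_lab s4 /=;
  [rewrite odd_cnext4 ?uniq_fv // | rewrite odd_cprev4 ?uniq_fv //];
  by case: (odd _).
Qed.

End Main.


Section Main2.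
Variables (V F : eqType) (adj : V -> V -> Prop) (fv : F -> seq V) (act : endo -> V -> V).
Hypothesis X : brady_complex adj fv act.
Variable S : F -> Prop.
Hypothesis HS : hamiltonian_surface adj fv S.

Lemma cycle_data x : exists (phi : nat -> V) (psi : nat -> F) (l : seq nat),
  [/\ (forall i j, i < 8 -> j < 8 -> phi i = phi j -> i = j),
      (forall k l, k < 12 -> l < 12 -> psi k = psi l -> k = l),
      (forall k, k < 12 -> linkedge fv x (psi k) (phi (le1 k)) (phi (le2 k)) /\
                           corner_lab fv (psi k) x = lel k),
      [/\ size l = 8, all (fun a => a < 8) l, Hcyc l & all (fun k => k < 12) (es_of l)] &
      forall f, x \in fv f -> (S f <-> exists2 k, k \in es_of l & psi k = f)].
Proof.
have [phi [psi [Hphi [Hphis [Hpsi [Hpsis Hle]]]]]] := bc_links X x.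
have Hle' : forall k, k < 12 -> linkedge fv x (psi k) (phi (le1 k)) (phi (le2 k)) /\
                           corner_lab fv (psi k) x = lel k.
  move=> k hk; have := Hle k hk; rewrite /le1 /le2 /lel.
  by case: (nth _ _ k) => [[a b] c].
exists phi, psi.
case: HS => _ _ Hedge Hcyc'.
have [n [n3 [ys [fs [Hys Hfs Hc Hcov]]]]] := Hcyc' x.
have n0 : 0 < n by apply: leq_trans n3.
pose kap i := find (fun k => psi k == fs i) (iota 0 12).
have Hk : forall i, i < n -> kap i < 12 /\ psi (kap i) = fs i.
  move=> i hi; have [_ [xf _]] := Hc i hi.
  have [k hk e] := (Hpsis (fs i)).1 xf.
  have [h1 /eqP h2] := @find_iota (fun k => psi k == fs i) 12 (ex_intro2 _ _ k hk (introT eqP e)).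
  by [].
have Hys8 : forall i, i < n -> exists2 j, j < 8 & phi j = ys i.
  move=> i hi; have [k12 ek] := Hk i hi; have [_ hl] := Hc i hi.
  have [hl' _] := Hle' _ k12; rewrite ek in hl'.
  have /and3P[b1 b2 _] := ladj_edges k12.
  case: (linkedge_pair hl hl') => [[-> _]|[-> _]]; by [exists (le1 (kap i)) | exists (le2 (kap i))].
pose alp i := find (fun j => phi j == ys i) (iota 0 8).
have Ha : forall i, i < n -> alp i < 8 /\ phi (alp i) = ys i.
  move=> i hi; have [j hj e] := Hys8 i hi.
  have [h1 /eqP h2] := @find_iota (fun j => phi j == ys i) 8 (ex_intro2 _ _ j hj (introT eqP e)).
  by [].
have Hmod : forall i, i < n -> i.+1 %% n < n by move=> i _; rewrite ltn_mod.
have Hpair : forall i, i < n ->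
   (alp i = le1 (kap i) /\ alp (i.+1 %% n) = le2 (kap i)) \/
   (alp i = le2 (kap i) /\ alp (i.+1 %% n) = le1 (kap i)).
  move=> i hi; have [k12 ek] := Hk i hi; have [_ hl] := Hc i hi.
  have [hl' _] := Hle' _ k12; rewrite ek in hl'.
  have /and3P[b1 b2 _] := ladj_edges k12.
  have [a1 e1] := Ha i hi; have [a2 e2] := Ha _ (Hmod i hi).
  rewrite -e1 -e2 in hl.
  case: (linkedge_pair hl hl') => [[/Hphi p1 /Hphi p2]|[/Hphi p1 /Hphi p2]]; [left|right];
    split; by [apply: p1 | apply: p2].
have Hinj : forall i j, i < n -> j < n -> alp i = alp j -> i = j.
  move=> i j hi hj e; apply: Hys => //.
  by rewrite -(Ha i hi).2 -(Ha j hj).2 e.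
have Hsurj : forall v, v < 8 -> exists2 i, i < n & alp i = v.
  move=> v hv.
  have [f Sf ef] := Hedge x (phi v) ((Hphis (phi v)).2 (ex_intro2 _ _ v hv erefl)).
  have [i hi efs] := Hcov f Sf ef.1.
  have [_ hl] := Hc i hi; rewrite efs in hl.
  have [a1 e1] := Ha i hi; have [a2 e2] := Ha _ (Hmod i hi).
  case: ((linkedge_edge _ hl).1 ef) => e.
  - by exists i => //; apply: Hphi => //; rewrite e1.
  - by exists (i.+1 %% n); [apply: Hmod | apply: Hphi => //; rewrite e2].
have u : uniq (map alp (iota 0 n)).
  rewrite map_inj_in_uniq ?iota_uniq // => i j; rewrite !mem_iota !add0n => hi hj.
  exact: Hinj.
have en : n = 8.
  apply/eqP; rewrite eqn_leq; apply/andP; split.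
  - have := uniq_leq_size u (s2 := iota 0 8); rewrite size_map !size_iota; apply.
    by move=> a /mapP [i]; rewrite mem_iota add0n => /andP [_ hi] ->; rewrite mem_iota (Ha i hi).1.
  - have := uniq_leq_size (iota_uniq 0 8) (s2 := map alp (iota 0 n)); rewrite size_map !size_iota; apply.
    move=> v; rewrite mem_iota add0n => /andP [_ hv]; have [i hi <-] := Hsurj v hv.
    by apply: map_f; rewrite mem_iota.
subst n.
have Hadj : forall i, i < 8 -> ladj (alp i) (alp (i.+1 %% 8)).
  move=> i hi; have [k12 _] := Hk i hi.
  have /and3P[_ _ /andP[? /andP[? _]]] := ladj_edges k12.
  by case: (Hpair i hi) => [[-> ->]|[-> ->]].
have Heidx : forall i, i < 8 -> eidx (alp i) (alp (i.+1 %% 8)) = kap i.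
  move=> i hi; have [k12 _] := Hk i hi.
  have /and3P[_ _ /andP[_ /andP[_ /andP[/eqP ? /eqP ?]]]] := ladj_edges k12.
  by case: (Hpair i hi) => [[-> ->]|[-> ->]].
pose l := map alp (iota 0 8).
have Hes : es_of l = map kap (iota 0 8).
  rewrite /l /=.
  rewrite -(Heidx 0) // -(Heidx 1) // -(Heidx 2) // -(Heidx 3) // -(Heidx 4) //
          -(Heidx 5) // -(Heidx 6) // -(Heidx 7) //.
exists l; split => //.
- split.
  + by rewrite size_map size_iota.
  + by apply/allP => a /mapP [i]; rewrite mem_iota add0n => /andP [_ hi] ->; apply: (Ha i hi).1.
  + rewrite /Hcyc u /=.
    by rewrite (Hadj 0) // (Hadj 1) // (Hadj 2) // (Hadj 3) // (Hadj 4) // (Hadj 5) // (Hadj 6) // (Hadj 7).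
  + by rewrite Hes; apply/allP => a /mapP [i]; rewrite mem_iota add0n => /andP [_ hi] ->; apply: (Hk i hi).1.
- move=> f xf; rewrite Hes; split.
  + move=> Sf; have [i hi efs] := Hcov f Sf xf.
    by exists (kap i); [apply: map_f; rewrite mem_iota | rewrite (Hk i hi).2].
  + by case=> k /mapP [i]; rewrite mem_iota add0n => /andP [_ hi] -> <-; rewrite (Hk i hi).2; case: (Hc i hi).
Qed.
End Main2.


Section Main3.
Variables (V F : eqType) (adj : V -> V -> Prop) (fv : F -> seq V) (act : endo -> V -> V).
Hypothesis X : brady_complex adj fv act.
Variable S : F -> Prop.
Hypothesis HS : hamiltonian_surface adj fv S.

Lemma local_facts x : exists l : seq nat,
  [/\ (exists T, [/\ S T, is_tri fv T & x \in fv T]),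
   (forall T y, S T -> is_tri fv T -> x \in fv T ->
      (y = cnext (fv T) x \/ y = cprev (fv T) x) ->
      exists g, [/\ S g, g <> T & edge_in fv g x y]),
   (forall T g g', S T -> is_tri fv T -> x \in fv T -> S g -> S g' -> g <> T -> g' <> T ->
      edge_in fv g x (cnext (fv T) x) -> edge_in fv g' x (cprev (fv T) x) ->
      ~ (corner_lab fv g x = LL /\ corner_lab fv g' x = LL) /\
      ((corner_lab fv g x = LL \/ corner_lab fv g' x = LL) -> T3 l))
   & (T3 l -> type3 fv S x)].
Proof.
have [phi [psi [l [Hphi Hpsi Hle [Hsz Hl8 Hcl Hes12] Hmem]]]] := cycle_data X HS x.
have HG := fin_check Hsz Hl8 Hcl.
have memS : forall k, k \in es_of l -> [/\ S (psi k), x \in fv (psi k) & k < 12].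
  move=> k ke; have k12 : k < 12 by apply: (allP Hes12).
  have xf : x \in fv (psi k) by case: (Hle k k12) => [[]].
  by split=> //; apply/(Hmem _ xf); exists k.
have inE_of : forall k1 a, k1 \in es_of l -> a < 8 ->
    edge_in fv (psi k1) x (phi a) -> einc a k1.
  move=> k1 a k1e a8 ein; have [_ _ k12] := memS _ k1e.
  have /and3P[b1 b2 _] := ladj_edges k12.
  case: ((linkedge_edge _ (Hle k1 k12).1).1 ein) => e.
  - by rewrite /einc (Hphi _ _ a8 b1 e) eqxx.
  - by rewrite /einc (Hphi _ _ a8 b2 e) eqxx orbT.
have tri_k : forall T, S T -> is_tri fv T -> x \in fv T ->
    exists k, [/\ k \in es_of l, psi k = T, k < 12 & tri_ok l (es_of l) (T3 l) k].
  move=> T ST tT xT.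
  have [k ke eT] := (Hmem T xT).1 ST.
  have [_ _ k12] := memS _ ke.
  exists k; split=> //.
  case/andP: HG => _ /allP/(_ k ke)/implyP; apply.
  have := (Hle k k12).2; rewrite eT => /esym e; move/(tri_corner fv T x): tT.
  by rewrite e => ->.
have LE : forall a b, ladj a b ->
    linkedge fv x (psi (eidx a b)) (phi a) (phi b) /\ corner_lab fv (psi (eidx a b)) x = lel (eidx a b).
  move=> a b hab; have [k12 hk] := eidx_spec hab.
  have [h1 h2] := Hle _ k12; split=> //.
  by case: hk => [[e1 e2]|[e1 e2]]; rewrite e1 e2 in h1 => //; apply: linkedge_sym.
exists l; split.
-
  case/andP: HG => /hasP [k ke hk] _.
  have [Sk xk k12] := memS _ ke.
  exists (psi k); split=> //; apply/(tri_corner fv _ x).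
  by rewrite (Hle k k12).2; move: hk; case: (lel k).
-
  move=> T y ST tT xT hy.
  have [k [ke eT k12 tok]] := tri_k T ST tT xT.
  case/and3P: tok => h1 h2 _.
  have /and3P[b1 b2 _] := ladj_edges k12.
  have eyT : edge_in fv T x y by split=> //; case: hy => ->; [left|right].
  rewrite -eT in eyT.
  have pick : forall a, y = phi a ->
      has (fun k1 => (k1 != k) && einc a k1) (es_of l) ->
      exists g, [/\ S g, g <> T & edge_in fv g x y].
    move=> a ya /hasP [k1 k1e /andP [nk ia]].
    have [S1 x1 k112] := memS _ k1e.
    exists (psi k1); split=> //.
    + move=> e; move/eqP: nk; apply; apply: Hpsi => //; by rewrite e eT.
    + apply/(linkedge_edge y (Hle k1 k112).1); rewrite ya.
      by case/orP: ia => /eqP ->; [left|right].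
  case: ((linkedge_edge y (Hle k k12).1).1 eyT) => ey.
  + exact: pick ey h1.
  + exact: pick ey h2.
-
  move=> T g g' ST tT xT Sg Sg' gT g'T eg eg'.
  have [k [ke eT k12 tok]] := tri_k T ST tT xT.
  case/and3P: tok => _ _ h3.
  have /and3P[b1 b2 _] := ladj_edges k12.
  have [k1 k1e eg1] := (Hmem g eg.1).1 Sg.
  have [k2 k2e eg2] := (Hmem g' eg'.1).1 Sg'.
  have [_ _ k112] := memS _ k1e; have [_ _ k212] := memS _ k2e.
  have n1 : k1 != k by apply/eqP => e; apply: gT; rewrite -eg1 -eT e.
  have n2 : k2 != k by apply/eqP => e; apply: g'T; rewrite -eg2 -eT e.
  rewrite -eg1 (Hle k1 k112).2 -eg2 (Hle k2 k212).2.
  rewrite -eg1 -eT in eg; rewrite -eg2 -eT in eg'.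
  case: (Hle k k12).1 => _ [[ep en]|[ep en]]; rewrite ep in eg'; rewrite en in eg.
  + have i1 := inE_of _ _ k1e b2 eg; have i2 := inE_of _ _ k2e b1 eg'.
    have := allP (allP h3 k2 k2e) k1 k1e; rewrite n1 n2 i1 i2 /=.
    by case: (lel k1); case: (lel k2) => //=; case: (T3 l) => //=; intuition discriminate.
  + have i1 := inE_of _ _ k1e b1 eg; have i2 := inE_of _ _ k2e b2 eg'.
    have := allP (allP h3 k1 k1e) k2 k2e; rewrite n1 n2 i1 i2 /=.
    by case: (lel k1); case: (lel k2) => //=; case: (T3 l) => //=; intuition discriminate.
-
  case/hasP => s _ /and3P [hl hu hp].
  have Hr8 : all (fun a => a < 8) (rot s l).
    by apply/allP => a; rewrite mem_rot => /(allP Hl8).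
  have Hru : uniq (rot s l) by rewrite rot_uniq; case/andP: Hcl.
  have Hrc : cycle ladj (rot s l) by rewrite rot_cycle; case/andP: Hcl.
  have Hrs : size (rot s l) = 8 by rewrite size_rot.
  move: (rot s l) Hr8 Hru Hrc Hrs hl hu hp => r.
  case: r => [|v0 [|v1 [|v2 [|v3 [|v3' [|w2 [|w1 [|v0' [|? ?]]]]]]]]] //= Hr8 Hru Hrc _ hl hu hp.
  move: Hrc => /andP[c1 /andP[c2 /andP[c3 /andP[c4 /andP[c5 /andP[c6 /andP[c7 /andP[c8 _]]]]]]]].
  move: Hr8 => /andP[d1 /andP[d2 /andP[d3 /andP[d4 /andP[d5 /andP[d6 /andP[d7 /andP[d8 _]]]]]]]].
  set R := [:: eidx v0' v0; eidx v3 v3'; eidx v0 v1; eidx v1 v2; eidx v2 v3; eidx w1 v0'; eidx w2 w1; eidx v3' w2].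
  have hR : perm_eq R (es_of l) := hp.
  have uR : uniq R := hu.
  have R12 : forall k, k \in R -> k < 12.
    by move=> k; rewrite (perm_mem hR) => /(allP Hes12).
  move/eqP: hl => hl.
  have l1 : labc (lel (eidx v0 v1)) = 0 := f_equal (fun s => nth 0 s 0) hl.
  have l2 : labc (lel (eidx v1 v2)) = 1 := f_equal (fun s => nth 0 s 1) hl.
  have l3 : labc (lel (eidx v2 v3)) = 0 := f_equal (fun s => nth 0 s 2) hl.
  have l4 : labc (lel (eidx v3 v3')) = 2 := f_equal (fun s => nth 0 s 3) hl.
  have l5 : labc (lel (eidx v3' w2)) = 0 := f_equal (fun s => nth 0 s 4) hl.
  have l6 : labc (lel (eidx w2 w1)) = 1 := f_equal (fun s => nth 0 s 5) hl.
  have l7 : labc (lel (eidx w1 v0')) = 0 := f_equal (fun s => nth 0 s 6) hl.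
  have l8 : labc (lel (eidx v0' v0)) = 2 := f_equal (fun s => nth 0 s 7) hl.
  have Hm : forall f, (S f /\ x \in fv f) <-> f \in map psi R.
    move=> f; split.
    + case=> Sf xf; have [k ke <-] := (Hmem f xf).1 Sf.
      by apply: map_f; rewrite (perm_mem hR).
    + case/mapP => k kR ->; rewrite (perm_mem hR) in kR.
      by have [? ? _] := memS _ kR.
  have uP : uniq (map psi R).
    rewrite map_inj_in_uniq // => a b ha hb; apply: Hpsi; exact: R12.
  have A8 : all (fun a => a < 8) [:: v0; v1; v2; v3; v3'; w2; w1; v0'].
    by rewrite /= d1 d2 d3 d4 d5 d6 d7 d8.
  have uV : uniq (map phi [:: v0; v1; v2; v3; v3'; w2; w1; v0']).
    rewrite map_inj_in_uniq // => a b ha hb; apply: Hphi.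
    + exact: (allP A8 a ha).
    + exact: (allP A8 b hb).
  have lab_of : forall a b lb, ladj a b -> labc (lel (eidx a b)) = labc lb ->
      corner_lab fv (psi (eidx a b)) x = lb.
    by move=> a b lb hab e; rewrite (LE a b hab).2; apply: labc_inj.
  exists (psi (eidx v0' v0)), (psi (eidx v3 v3')), (psi (eidx v0 v1)), (psi (eidx v1 v2)),
    (psi (eidx v2 v3)), (psi (eidx w1 v0')), (psi (eidx w2 w1)), (psi (eidx v3' w2)),
    (phi v0), (phi v1), (phi v2), (phi v3), (phi v0'), (phi w1), (phi w2), (phi v3').
  split.
  + exact: uP.
  + exact: uV.
  + split; first exact: linkedge_sym (LE _ _ c8).1.
    split; first exact: (LE _ _ c4).1.
    split; first exact: (LE _ _ c1).1.
    split; first exact: (LE _ _ c2).1.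
    split; first exact: (LE _ _ c3).1.
    split; first exact: linkedge_sym (LE _ _ c7).1.
    split; first exact: linkedge_sym (LE _ _ c6).1.
    exact: linkedge_sym (LE _ _ c5).1.
  + split; first exact: (@lab_of _ _ LL c8 l8).
    split; first exact: (@lab_of _ _ LL c4 l4).
    split; first exact: (@lab_of _ _ Lt c1 l1).
    split; first exact: (@lab_of _ _ Ll c2 l2).
    split; first exact: (@lab_of _ _ Lt c3 l3).
    split; first exact: (@lab_of _ _ Lt c7 l7).
    split; first exact: (@lab_of _ _ Ll c6 l6).
    exact: (@lab_of _ _ Lt c5 l5).
  + exact: Hm.
Qed.
End Main3.


Section Main4.
Variables (V F : eqType) (adj : V -> V -> Prop) (fv : F -> seq V) (act : endo -> V -> V).
Hypothesis X : brady_complex adj fv act.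
Variable S : F -> Prop.
Hypothesis HS : hamiltonian_surface adj fv S.

Lemma loz_of T g a b : is_tri fv T -> edge_in fv T a b -> edge_in fv g a b -> g <> T ->
  adj a b -> is_loz fv g.
Proof.
move=> tT eT eg ne hab.
have [t [tt et ut]] := bc_one_tri X hab.
case/andP: (bc_face_shape X g) => /orP [tg|//] _.
by exfalso; apply: ne; rewrite (ut g tg eg) (ut T tT eT).
Qed.

Lemma labdec (l : lab) : l = LL \/ l <> LL.
Proof. by case: l; [right|right|left]. Qed.

Lemma main_local x : type3 fv S x.
Proof.
have [l [[T [ST tT xT]] Hb Hc Hd]] := local_facts X HS x.
have uT := uniq_fv X T.
have s3 : size (fv T) = 3 by apply/eqP.
have qT := cnext_in xT; have rT := cprev_in xT.
have e_qr : cnext (fv T) (cnext (fv T) x) = cprev (fv T) x by rewrite cnext_cnext3.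
have e_qx : cprev (fv T) (cnext (fv T) x) = x by rewrite cprev_cnext.
have e_rx : cnext (fv T) (cprev (fv T) x) = x by rewrite cnext_cprev.
have e_rq : cprev (fv T) (cprev (fv T) x) = cnext (fv T) x by rewrite cprev_cprev3.
have [q eq] : exists q, cnext (fv T) x = q by eexists.
have [r er] : exists r, cprev (fv T) x = r by eexists.
rewrite eq er in qT rT e_qr e_qx e_rx e_rq.
have [lq [_ Hbq Hcq _]] := local_facts X HS q.
have [lr [_ Hbr Hcr _]] := local_facts X HS r.
have eTxq : edge_in fv T x q by split=> //; left.
have eTqr : edge_in fv T q r by split=> //; left.
have eTrx : edge_in fv T r x by split=> //; left.
have axq : adj x q by rewrite -eq; apply: (bc_face_edges X).
have aqr : adj q r by rewrite -e_qr; apply: (bc_face_edges X).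
have arx : adj r x by rewrite -{1}e_rx; apply: (bc_face_edges X).
have [g1 [S1 n1 e1]] := Hb T q ST tT xT (or_introl (esym eq)).
have [g2 [S2 n2 e2]] := Hbq T r ST tT qT (or_introl (esym e_qr)).
have [g3 [S3 n3 e3]] := Hbr T x ST tT rT (or_introl (esym e_rx)).
have lz1 := loz_of tT eTxq e1 n1 axq.
have lz2 := loz_of tT eTqr e2 n2 aqr.
have lz3 := loz_of tT eTrx e3 n3 arx.
have f1 := loz_flip X lz1 e1.
have f2 := loz_flip X lz2 e2.
have f3 := loz_flip X lz3 e3.
have a1 : edge_in fv g1 x (cnext (fv T) x) by rewrite eq.
have a2 : edge_in fv g3 x (cprev (fv T) x) by rewrite er; apply: (edge_in_sym X e3).
have a3 : edge_in fv g2 q (cnext (fv T) q) by rewrite e_qr.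
have a4 : edge_in fv g1 q (cprev (fv T) q) by rewrite e_qx; apply: (edge_in_sym X e1).
have a5 : edge_in fv g3 r (cnext (fv T) r) by rewrite e_rx.
have a6 : edge_in fv g2 r (cprev (fv T) r) by rewrite e_rq; apply: (edge_in_sym X e2).
have Cx := Hc T g1 g3 ST tT xT S1 S3 n1 n3 a1 a2.
have Cq := Hcq T g2 g1 ST tT qT S2 S1 n2 n1 a3 a4.
have Cr := Hcr T g3 g2 ST tT rT S3 S2 n3 n2 a5 a6.
apply: Hd; apply: Cx.2.
case: (labdec (corner_lab fv g1 x)) => A; first by left.
case: (labdec (corner_lab fv g3 x)) => C; first by right.
exfalso.
have Aq := f1.2 A.
have Bq : corner_lab fv g2 q <> LL by move=> B; apply: Cq.1.
have Br := f2.2 Bq.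
have Cr' : corner_lab fv g3 r = LL.
  by case: (labdec (corner_lab fv g3 r)) => // h; exfalso; apply: C; apply: f3.2.
by apply: Cr.1.
Qed.
End Main4.

Theorem mainTheorem5 (V F : eqType) (adj : V -> V -> Prop) (fv : F -> seq V)
    (act : endo -> V -> V) (X : brady_complex adj fv act)
    (S : F -> Prop) (HS : hamiltonian_surface adj fv S) :
  forall x : V, type3 fv S x.
Proof. move=> x; exact: (main_local X HS x). Qed.
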